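(* Let $n\geqslant 3$, let $S$ be a caterpillar species tree with canonical label vector $(s_1,\dots,s_n)$, and let $k_s,k_\ell\in\{1,\dots,n\}$ with $k_s<k_\ell$ and $k_\ell\neq 2$. Let $G$ be the caterpillar gene tree obtained from $S$ by reverse incrementation on positions $k_s,\dots,k_\ell$, i.e. with canonical label vector $(g_1,\dots,g_n)$ given by $g_k=s_{k+1}$ for $k_s\leqslant k<k_\ell$, $g_{k_\ell}=s_{k_s}$, and $g_k=s_k$ for $k\notin\{k_s,\dots,k_\ell\}$. Then the roadblock set $B_{G,S}$ consists of a set of consecutive points on the diagonal of the square lattice, i.e. $B_{G,S}=\{(i,i): a\leqslant i\leqslant b\}$ for some integers $a\leqslant b$.
   Context: All trees are binary, rooted, leaf-labeled. A caterpillar tree with $n$ leaves is one in which some internal node is descended from all other internal nodes. Its canonical label vector $(x_1,\dots,x_n)$ has $x_1,x_2$ the labels of the two leaves of the cherry (unique internal node with two descendant leaves) and, for $3\leqslant i\leqslant n$, $x_i$ the label of the leaf separated from the root by $n-i+1$ edges; vectors differing only by swapping $x_1,x_2$ describe the same tree. For caterpillars $G,S$ with canonical vectors $\mathbf g,\mathbf s$, let $\sigma(x)$ be the index of label $x$ in $\mathbf s$, $F(j)=\max\{\sigma(g_1),\dots,\sigma(g_{j+1})\}-1$ for $1\leqslant j\leqslant n-1$, and define the roadblock set $B_{G,S}=\{(i,j)\in\mathbb Z^2:1\leqslant j\leqslant i\leqslant n-1,\ i<F(j)\}$. *)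

(* Defs.v *)
From mathcomp Require Import all_boot.
Set Implicit Arguments. Unset Strict Implicit. Unset Printing Implicit Defensive.

(* A canonical label vector (x_1,...,x_n) is encoded as a function
   x : nat -> T read on the 1-based indices 1..n. *)

Definition label_vector (T : eqType) (n : nat) (x : nat -> T) : Prop :=
  {in [pred i | 1 <= i <= n] &, injective x}.

Definition sigma (T : eqType) (n : nat) (s : nat -> T) (x : T) : nat :=
  (index x [seq s i | i <- iota 1 n]).+1.

Definition Froad (T : eqType) (n : nat) (g s : nat -> T) (j : nat) : nat :=
  (\max_(1 <= k < j.+2) sigma n s (g k)) - 1.

Definition roadblock (T : eqType) (n : nat) (g s : nat -> T) (i j : nat) : Prop :=
  [/\ 1 <= j, j <= i, i <= n - 1 & i < Froad n g s j].

Definition rev_incr (T : Type) (s : nat -> T) (ks kl : nat) : nat -> T :=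
  fun k => if (ks <= k) && (k < kl) then s k.+1
           else if k == kl then s ks else s k.

(* Main.v *)
Require Import Defs.
From mathcomp Require Import all_boot.
From mathcomp Require Import zify.

Lemma sigma_s (T : eqType) (n : nat) (s : nat -> T) m :
  label_vector n s -> 1 <= m <= n -> sigma n s (s m) = m.
Proof.
move=> inj /andP[m1 mn].
rewrite /sigma.
have U : uniq [seq s i | i <- iota 1 n].
  rewrite map_inj_in_uniq ?iota_uniq //.
  move=> x y; rewrite !mem_iota => hx hy; apply: inj; rewrite inE /=; lia.
have -> : s m = nth (s 0) [seq s i | i <- iota 1 n] m.-1.
  rewrite (nth_map 0) ?size_iota; last lia.
  rewrite nth_iota; last lia. congr s; lia.
rewrite index_uniq // ?size_map ?size_iota; lia.
Qed.

Theorem proposition7 (T : eqType) (n : nat) (s : nat -> T) (ks kl : nat) :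
  3 <= n ->
  label_vector n s ->
  1 <= ks -> ks < kl -> kl <= n -> kl != 2 ->
  exists a b : nat, a <= b /\
    forall i j : nat,
      roadblock n (rev_incr s ks kl) s i j <-> (i = j /\ a <= i <= b).
Proof.
move=> n3 inj ks1 kskl kln kl2.
set r := fun k => if (ks <= k) && (k < kl) then k.+1 else if k == kl then ks else k.
have gE : forall k, rev_incr s ks kl k = s (r k).
  move=> k; rewrite /rev_incr /r; case: ifP => //; case: ifP => //.
have sg : forall k, 1 <= k <= n -> sigma n s (rev_incr s ks kl k) = r k.
  move=> k hk; rewrite gE sigma_s //; rewrite /r.
  case: ifP => [/andP[]|_]; first lia. case: ifP => [/eqP|_]; lia.
have key : forall i j, j.+1 <= n ->
   (i < Froad n (rev_incr s ks kl) s j) <->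
   (exists k, 1 <= k <= j.+1 /\ i.+2 <= r k).
  move=> i j hj; rewrite /Froad; split.
  - move=> H.
    have : ~~ (\max_(1 <= k < j.+2) sigma n s (rev_incr s ks kl k) <= i.+1) by lia.
    move/bigmax_leqP_seq => H2.
    case E: (has (fun k => i.+1 < r k) (index_iota 1 j.+2)).
      case/hasP: E => k; rewrite mem_index_iota => hk hr; exists k; split; lia.
    exfalso; apply: H2 => k hk _; move/hasPn: E => /(_ k hk).
    move: hk; rewrite mem_index_iota => hk; rewrite sg; last lia.
    lia.
  - case=> k [hk hr].
    have : sigma n s (rev_incr s ks kl k) <= \max_(1 <= k < j.+2) sigma n s (rev_incr s ks kl k).
      by apply: (leq_bigmax_seq k) => //; rewrite mem_index_iota; lia.
    rewrite sg; lia.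
exists (maxn 1 ks.-1), kl.-2; split; first lia.
move=> i j; rewrite /roadblock; split.
- case=> j1 ji iN.
  have hj : j.+1 <= n by lia.
  move/(key i j hj) => [k [hk]]; rewrite /r.
  case: ifP => [/andP[]|_] ; first lia.
  case: ifP => [/eqP|_]; lia.
- case=> -> hi.
  have hj : j.+1 <= n by lia.
  split; try lia.
  apply/(key j j hj); exists j.+1; split; first lia.
  rewrite /r ifT; lia.
Qed.
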